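(* Assume the setting and standing assumptions described in the context. Let $0<\tau_i<\tau_{i+1}$ and let $M_{\tau_i}$, $M_{\tau_{i+1}}$ be the corresponding isochronous manifolds. Then for every $x\in M_{\tau_i}$ there exists a unique $\lambda_x\in(0,1)$ such that $\lambda_x x\in M_{\tau_{i+1}}$, and there is no $\kappa_x\geq 1$ such that $\kappa_x x\in M_{\tau_{i+1}}$.
   Context: Let $f:\mathbb{R}^n\times\mathbb{R}^m\to\mathbb{R}^n$ and a feedback law $\upsilon:\mathbb{R}^n\to\mathbb{R}^m$ be given. Define the extended (event-triggered) vector field $F:\mathbb{R}^{2n}\to\mathbb{R}^{2n}$ by $F(z,e)=\big(f(z,\upsilon(z+e)),\,-f(z,\upsilon(z+e))\big)$ (state $\xi=(\zeta,\varepsilon)$, where $\varepsilon$ is the measurement error). For $x\in\mathbb{R}^n$, $\xi(t;x)$ denotes the solution of $\dot\xi=F(\xi)$ with $\xi(0;x)=(x,0)$. A triggering function $\phi:\mathbb{R}^{2n}\to\mathbb{R}$ is given, and the inter-event time of $x$ is $\tau(x)=\inf\{t>0:\phi(\xi(t;x))=0\}$. The isochronous manifold of time $\tau_\star>0$ is $M_{\tau_\star}=\{x\in\mathbb{R}^n:\tau(x)=\tau_\star\}$. Standing assumptions: (i) $F$ is smooth and homogeneous of degree $\alpha\ge 1$ with all weights equal to $1$, i.e. $F(\lambda\xi)=\lambda^{\alpha+1}F(\xi)$ for all $\lambda>0$; (ii) $\phi$ is smooth and homogeneous of degree $\theta\geq1$ with weights $1$, i.e. $\phi(\lambda\xi)=\lambda^{\theta+1}\phi(\xi)$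 for all $\lambda>0$; (iii) for every $x\in\mathbb{R}^n\setminus\{0\}$, $\phi((x,0))<0$ and there exists $t_x\in(0,\infty)$ with $\phi(\xi(t_x;x))=0$; (iv) compact sets $\mathrm{Z}\subset\mathbb{R}^n$ and $\Xi\subset\mathbb{R}^{2n}$, each containing a neighbourhood of the origin, are given such that for all $x\in\mathrm{Z}$ and $t\ge0$, $\phi(\xi(t;x))\le 0$ implies $\xi(t;x)\in\Xi$; (v) the origin is the only equilibrium of $\dot\zeta=f(\zeta,\upsilon(\zeta))$. *)

(* Defs.v *)
From HB Require Import structures.
From mathcomp Require Import all_boot all_order all_algebra.
From mathcomp Require Import all_classical all_reals all_analysis.
Set Implicit Arguments. Unset Strict Implicit. Unset Printing Implicit Defensive.
Import Order.TTheory GRing.Theory Num.Theory.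
Import numFieldNormedType.Exports.
Local Open Scope classical_set_scope.
Local Open Scope ring_scope.

Fixpoint iter_dder {R : realType} {V W : normedModType R}
    (vs : seq V) (f : V -> W) : V -> W :=
  match vs with
  | [::] => f
  | v :: vs' => fun x => 'D_v (iter_dder vs' f) x
  end.

Definition smooth {R : realType} {V W : normedModType R} (f : V -> W) : Prop :=
  forall vs : seq V,
    continuous (iter_dder vs f) /\
    forall (v x : V), derivable (iter_dder vs f) x v.

Definition Fext {R : realType} {n m : nat}
    (f : 'rV[R]_n -> 'rV[R]_m -> 'rV[R]_n) (ups : 'rV[R]_n -> 'rV[R]_m)
    (xi : 'rV[R]_(n + n)) : 'rV[R]_(n + n) :=
  let z := lsubmx xi in
  let e := rsubmx xi in
  row_mx (f z (ups (z + e))) (- f z (ups (z + e))).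

Definition is_solution_map {R : realType} {n : nat}
    (F : 'rV[R]_(n + n) -> 'rV[R]_(n + n))
    (xi : 'rV[R]_n -> R -> 'rV[R]_(n + n)) : Prop :=
  forall x : 'rV[R]_n,
    xi x 0 = row_mx x 0 /\
    xi x t @[t --> 0^'+] --> xi x 0 /\
    (forall t : R, 0 < t -> is_derive t 1 (xi x) (F (xi x t))).

Definition inter_event_time {R : realType} {n : nat}
    (phi : 'rV[R]_(n + n) -> R) (xi : 'rV[R]_n -> R -> 'rV[R]_(n + n))
    (x : 'rV[R]_n) : R :=
  inf [set t : R | 0 < t /\ phi (xi x t) = 0].

Definition isochronous {R : realType} {n : nat}
    (phi : 'rV[R]_(n + n) -> R) (xi : 'rV[R]_n -> R -> 'rV[R]_(n + n))
    (tau_star : R) : set 'rV[R]_n :=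
  [set x | inter_event_time phi xi x = tau_star].

(* Main.v *)
Require Import Defs.
From HB Require Import structures.
From mathcomp Require Import all_boot all_order all_algebra.
From mathcomp Require Import all_classical all_reals all_analysis.
From mathcomp Require Import lra ring.
Import Order.TTheory GRing.Theory Num.Theory.
Import numFieldNormedType.Exports.
Local Open Scope classical_set_scope.
Local Open Scope ring_scope.

Section H.
Context {R : realType} {N : nat}.

Lemma coord_le_norm (v : 'rV[R]_N) k : `|v ord0 k| <= `|v|.
Proof.
rewrite [leRHS]/Num.Def.normr /= mx_normrE.
by apply: le_trans (le_bigmax _ _ (ord0, k)).
Qed.

Lemma norm_le_coord (v : 'rV[R]_N) c : 0 <= c -> (forall k, `|v ord0 k| <= c) -> `|v| <= c.
Proof.
move=> c0 H; rewrite [leLHS]/Num.Def.normr /= mx_normrE.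
apply: bigmax_le => // -[i k] _ /=.
by rewrite (ord1 i).
Qed.

Lemma line_derive (F : 'rV[R]_N -> 'rV[R]_N) (e p : 'rV[R]_N) (s : R) :
  derivable F (s *: e + p) e ->
  is_derive s 1 (fun s => F (s *: e + p)) ('D_e F (s *: e + p)).
Proof.
move=> dF.
have E : (fun h : R => h^-1 *: (((fun s => F (s *: e + p)) \o shift s) (h *: 1) - F (s *: e + p)))
   = (fun h : R => h^-1 *: ((F \o shift (s *: e + p)) (h *: e) - F (s *: e + p))).
  apply/funext => h /=; congr (_ *: (F _ - _)).
  rewrite /= /shift scalerDl -addrA; congr (_ + _).
  by rewrite -[X in X *: e]/(h * 1) mulr1.
apply: DeriveDef; first by rewrite /derivable E.
by rewrite /derive E.
Qed.

Lemma mvt_bound (g dg : R -> R) (a b K : R) :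
  (forall s : R, is_derive s (1:R) g (dg s)) ->
  (forall s, a <= s <= b -> `|dg s| <= K) -> a <= b ->
  `|g b - g a| <= K * (b - a).
Proof.
move=> dg_ Hb ab.
have cg : {within `[a, b], continuous g}.
  apply: continuous_subspaceT => x; apply: differentiable_continuous.
  by apply/derivable1_diffP; case: (dg_ x).
have [c cab ->] := MVT_segment ab (fun x _ => dg_ x) cg.
have ab0 : 0 <= b - a by rewrite subr_ge0.
rewrite normrM (ger0_norm ab0) ler_wpM2r //.
by apply: Hb; move: cab; rewrite in_itv.
Qed.

Lemma is_derive_coord (M : R -> 'rV[R]_N) (t : R) dM k :
  is_derive t (1:R) M dM -> is_derive t (1:R) (fun s => M s ord0 k) (dM ord0 k).
Proof.
case=> dM1 <-; apply: DeriveDef; first by move/derivable_mxP: dM1; apply.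
by rewrite derive_mx // mxE.
Qed.

Lemma step_bound (F : 'rV[R]_N -> 'rV[R]_N) (e p : 'rV[R]_N) (d K : R) :
  (forall x v, derivable F x v) ->
  (forall s, Num.min 0 d <= s <= Num.max 0 d -> `|'D_e F (s *: e + p)| <= K) ->
  `|F (d *: e + p) - F p| <= K * `|d|.
Proof.
move=> dF HK.
have K0 : 0 <= K.
  apply: le_trans (HK 0 _) => //.
  by rewrite ge_min lexx /= le_max lexx.
apply: norm_le_coord; first by rewrite mulr_ge0.
move=> k.
pose g s := F (s *: e + p) ord0 k.
pose dg s := 'D_e F (s *: e + p) ord0 k.
have gd : forall s : R, is_derive s (1:R) g (dg s).
  by move=> s; apply: is_derive_coord; apply: line_derive.
have gb : forall s, Num.min 0 d <= s <= Num.max 0 d -> `|dg s| <= K.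
  by move=> s /HK; apply: le_trans; apply: coord_le_norm.
rewrite !mxE.
have -> : F p ord0 k = g 0 by rewrite /g scale0r add0r.
rewrite -/(g d).
case: (leP 0 d) => d0.
  rewrite (ger0_norm d0) -[d in K * d]subr0.
  apply: mvt_bound gd _ d0 => s /andP[s1 s2]; apply: gb.
  by rewrite ge_min s1 le_max s2 orbT.
rewrite distrC (ltr0_norm d0) -[- d]add0r.
apply: mvt_bound gd _ (ltW d0) => s /andP[s1 s2]; apply: gb.
by rewrite ge_min s1 orbT le_max s2.
Qed.

Lemma compact_norm_bound (V : normedModType R) (A : set V) :
  compact A -> exists K, forall x, A x -> `|x| <= K.
Proof.
move=> /compact_bounded [M [_ HM]]; exists (M + 1) => x Ax.
by apply: (HM (M + 1)); rewrite ?ltrDl.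
Qed.

Lemma ball_compact (r : R) : 0 < r -> compact [set p : 'rV[R]_N | `|p| <= r].
Proof.
move=> r0.
apply: bounded_closed_compact.
  exists r; split; first by rewrite num_real.
  by move=> x rx p /= pr; apply: le_trans pr (ltW rx).
have -> : [set p : 'rV[R]_N | `|p| <= r] = closed_ball 0 r.
  by rewrite closed_ballE //; apply/funext => p /=; rewrite /closed_ball_ /= distrC subr0.
exact: closed_ball_closed.
Qed.

Lemma lip (F : 'rV[R]_N -> 'rV[R]_N) :
  (forall x v, derivable F x v) -> (forall v, continuous (fun x => 'D_v F x)) ->
  forall M, exists L, 0 <= L /\ forall a b, `|a| <= M -> `|b| <= M ->
    `|F b - F a| <= L * `|b - a|.
Proof.
move=> dF cF M.
pose r := `|M| + 1.
have r0 : 0 < r by rewrite /r ltr_wpDl.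
have Mr : M <= r by rewrite /r; apply: le_trans (ler_norm M) _; rewrite lerDl.
pose B := [set p : 'rV[R]_N | `|p| <= r].
have cB : compact B := @ball_compact r r0.
have /choice [K HK] : forall i : 'I_N, exists K : R,
    forall p, B p -> `|'D_(delta_mx 0 i) F p| <= K.
  move=> i.
  have [K HK] := @compact_norm_bound _ _
    (continuous_compact (continuous_subspaceT (cF (delta_mx 0 i))) cB).
  by exists K => p Bp; apply: HK; exists p.
pose Km := \big[Num.max/0]_i K i.
have Km0 : 0 <= Km by apply: bigmax_ge_id.
have HKm : forall i p, B p -> `|'D_(delta_mx 0 i) F p| <= Km.
  move=> i p Bp; apply: le_trans (HK i p Bp) _; exact: le_bigmax.
exists (Km *+ N); split; first by rewrite mulrn_wge0.
move=> a b aM bM.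
pose c (j : nat) := \row_k (if (k < j)%N then b ord0 k else a ord0 k) : 'rV[R]_N.
have c0 : c 0%N = a by apply/rowP => k; rewrite mxE.
have cN : c N = b by apply/rowP => k; rewrite mxE ltn_ord.
have ha : forall k, - M <= a ord0 k <= M.
  by move=> k; rewrite -ler_norml; apply: le_trans (coord_le_norm _ _) aM.
have hb : forall k, - M <= b ord0 k <= M.
  by move=> k; rewrite -ler_norml; apply: le_trans (coord_le_norm _ _) bM.
have cstep : forall j : 'I_N,
    c j.+1 = (b ord0 j - a ord0 j) *: delta_mx 0 j + c j.
  move=> j; apply/rowP => k; rewrite !mxE ltnS eqxx /=.
  case: (ltngtP k j) => kj.
  - have -> : (k == j) = false by apply/negbTE; rewrite -(inj_eq val_inj) /= ltn_eqF.
    by rewrite mulr0 add0r.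
  - have -> : (k == j) = false by apply/negbTE; rewrite -(inj_eq val_inj) /= gtn_eqF.
    by rewrite mulr0 add0r.
  - have -> : k = j by apply: val_inj.
    by rewrite eqxx mulr1 subrK.
have -> : F b - F a = \sum_(j < N) (F (c j.+1) - F (c j)).
  by rewrite -(big_mkord xpredT (fun j => F (c j.+1) - F (c j))) telescope_sumr // cN c0.
apply: le_trans (ler_norm_sum _ _ _) _.
apply: (@le_trans _ _ (\sum_(j < N) Km * `|b - a|)); last first.
  by rewrite sumr_const card_ord mulrnAl.
apply: ler_sum => j _.
rewrite cstep.
apply: le_trans (step_bound _ _ _ _ Km dF _) _.
  move=> s Hs; apply: HKm; rewrite /B /=.
  apply: norm_le_coord; first exact: ltW.
  move=> k; rewrite !mxE eqxx /=.
  case: (eqVneq k j) => [->|kj].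
    rewrite ltnn mulr1 ler_norml.
    move: Hs (ha j) (hb j); case: (leP 0 (b ord0 j - a ord0 j)) => d0.
      move=> /andP[s1 s2] /andP[a1 a2] /andP[b1 b2].
      apply/andP; split; lra.
    move=> /andP[s1 s2] /andP[a1 a2] /andP[b1 b2].
    apply/andP; split; lra.
  rewrite mulr0n mulr0 add0r; apply: le_trans Mr.
  case: ifP => _; apply: le_trans (coord_le_norm _ _) _ => //.
rewrite ler_wpM2l //.
by apply: le_trans (coord_le_norm (b - a) j); rewrite !mxE.
Qed.

Lemma within_cont (V : normedModType R) (y : R -> V) (t0 : R) : 0 < t0 ->
  y t @[t --> 0^'+] --> y 0 -> (forall t, 0 < t -> derivable y t 1) ->
  {within `[0, t0], continuous y}.
Proof.
move=> t00 c0 dy; apply/continuous_within_itvP => //; split => //.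
- move=> s; rewrite in_itv => /andP[s0 _]; apply: differentiable_continuous.
  by apply/derivable1_diffP; exact: dy.
- apply: cvg_at_left_filter; apply: differentiable_continuous.
  by apply/derivable1_diffP; exact: dy.
Qed.

Lemma term_le_sum (v : 'rV[R]_N) k : (v ord0 k) ^+ 2 <= \sum_j (v ord0 j) ^+ 2.
Proof.
rewrite (bigD1 k) //= lerDl; apply: sumr_ge0 => j _; exact: sqr_ge0.
Qed.

Lemma sq_norm_le (v : 'rV[R]_N) : `|v| ^+ 2 <= \sum_j (v ord0 j) ^+ 2.
Proof.
case: (eqVneq `|v| 0) => [->|nz].
  rewrite expr0n /=; apply: sumr_ge0 => j _; exact: sqr_ge0.
have [[i k] E] := mx_norm_neq0 nz.
rewrite [`|v|]E /= (ord1 i) real_normK ?num_real //; exact: term_le_sum.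
Qed.

Lemma cvg_sumN (T : Type) (Fl : set_system T) {FF : Filter Fl}
  (f : 'I_N -> T -> R) (l : 'I_N -> R) :
  (forall k, f k @ Fl --> l k) -> (\sum_k f k) @ Fl --> \sum_k l k.
Proof.
move=> H; elim/big_ind2: _ => //.
- exact: cvg_cst.
- by move=> ? ? ? ? ? ?; apply: cvgD.
Qed.

Lemma ode_uniq (F : 'rV[R]_N -> 'rV[R]_N)
  (Flip : forall M, exists L, 0 <= L /\ forall a b, `|a| <= M -> `|b| <= M ->
    `|F b - F a| <= L * `|b - a|)
  (y1 y2 : R -> 'rV[R]_N) :
  y1 0 = y2 0 ->
  y1 t @[t --> 0^'+] --> y1 0 -> y2 t @[t --> 0^'+] --> y2 0 ->
  (forall t : R, 0 < t -> is_derive t (1:R) y1 (F (y1 t))) ->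
  (forall t : R, 0 < t -> is_derive t (1:R) y2 (F (y2 t))) ->
  forall t : R, 0 <= t -> y1 t = y2 t.
Proof.
move=> e0 c1 c2 d1 d2 t0; rewrite le_eqVlt => /predU1P[<-//|t0p].
have cw1 := @within_cont _ _ t0 t0p c1 (fun t t0 => @ex_derive _ _ _ _ _ _ _ (d1 t t0)).
have cw2 := @within_cont _ _ t0 t0p c2 (fun t t0 => @ex_derive _ _ _ _ _ _ _ (d2 t t0)).
have [M1 HM1] := @compact_norm_bound _ _ (continuous_compact cw1 (@segment_compact _ 0 t0)).
have [M2 HM2] := @compact_norm_bound _ _ (continuous_compact cw2 (@segment_compact _ 0 t0)).
have [L [L0 HL]] := Flip (Num.max M1 M2).
have B1 : forall t : R, 0 <= t <= t0 -> `|y1 t| <= Num.max M1 M2.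
  move=> t tt; rewrite le_max; apply/orP; left; apply: HM1; exists t => //.
have B2 : forall t : R, 0 <= t <= t0 -> `|y2 t| <= Num.max M1 M2.
  move=> t tt; rewrite le_max; apply/orP; right; apply: HM2; exists t => //.
pose u (t : R) := y1 t - y2 t.
pose g (t : R) := \sum_(k < N) (u t ord0 k) ^+ 2.
pose C := 2 * L * N%:R.
pose h (t : R) := expR (- C * t) * g t.
pose du (t : R) := F (y1 t) - F (y2 t).
pose dg (t : R) := \sum_(k < N) (u t ord0 k * du t ord0 k + u t ord0 k * du t ord0 k).
pose hd (t : R) := expR (- C * t) * (dg t - C * g t).
pose e (t : R) := expR (- C * t).
have eder : forall t : R, is_derive t (1:R) e (expR (- C * t) * (- C)).
  move=> t.
  have H2 : is_derive t (1:R) (fun t => - C * t) (- C).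
    have -> : (fun t => - C * t) = (- C) \*: (@id R) by apply/funext.
    have H := @is_deriveZ R R R id (- C) t 1 1 (is_derive_id t 1).
    exact: is_derive_eq H (mulr1 _).
  exact: (@is_derive1_comp R expR (fun t => - C * t) t (expR (- C * t)) (- C) (is_derive_expR _) H2).
have uder : forall t : R, 0 < t -> is_derive t (1:R) u (du t).
  by move=> t t0'; apply: (is_deriveB (d1 t t0') (d2 t t0')).
have gder : forall t : R, 0 < t -> is_derive t (1:R) g (dg t).
  move=> t t0'.
  have -> : g = \sum_(k < N) ((fun s => u s ord0 k) * (fun s => u s ord0 k)).
    by rewrite fct_sumE; apply/funext => s; rewrite /g; apply: eq_bigr => k _; rewrite expr2.
  apply: is_derive_sum => k.
  apply: is_derive_eq; first exact: (is_deriveM (@is_derive_coord u t (du t) k (uder t t0')) (@is_derive_coord u t (du t) k (uder t t0'))).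
  by rewrite /GRing.scale /= mulrC.
have hder : forall t : R, 0 < t -> is_derive t (1:R) h (hd t).
  move=> t t0'.
  have -> : h = e * g by apply/funext.
  apply: is_derive_eq; first exact: (is_deriveM (eder t) (gder t t0')).
  rewrite /hd /e /GRing.scale /=; ring.
have C0 : 0 <= C by rewrite /C !mulr_ge0.
have hle : forall t : R, 0 < t < t0 -> hd t <= 0.
  move=> t /andP[t0' tt].
  have tt' : 0 <= t <= t0 by rewrite !ltW.
  rewrite /hd pmulr_rle0 ?expR_gt0 // subr_le0.
  have Hd : `|du t| <= L * `|u t| := HL _ _ (B2 t tt') (B1 t tt').
  apply: (@le_trans _ _ (C * `|u t| ^+ 2)); last by rewrite ler_wpM2l ?sq_norm_le.
  apply: (@le_trans _ _ (\sum_(k < N) (2 * L * `|u t| ^+ 2))); last first.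
    by rewrite sumr_const card_ord /C -[X in X <= _]mulr_natr mulrAC.
  apply: ler_sum => k _.
  have Hk : u t ord0 k * du t ord0 k <= L * `|u t| ^+ 2.
    apply: le_trans (ler_norm _) _; rewrite normrM expr2 mulrCA.
    apply: ler_pM => //; first exact: coord_le_norm.
    exact: le_trans (coord_le_norm _ _) Hd.
  by rewrite -mulrA mulr_natl mulr2n; apply: lerD.
have hcont : {within `[0, t0], continuous h}.
  apply: (@within_cont _ h t0 t0p); last by move=> t t0'; case: (hder t t0').
  have uc : u t @[t --> 0^'+] --> u 0 by apply: cvgB.
  have gc : g t @[t --> 0^'+] --> g 0.
    have ck : forall k, (fun s => u s ord0 k) @ 0^'+ --> u 0 ord0 k.
      move=> k; exact: (@continuous_cvg R _ _ _ _ u (fun M : 'rV[R]_N => M ord0 k) (u 0) (@coord_continuous R 1 N ord0 k (u 0)) uc).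
    have H := @cvg_sumN _ _ _ (fun k s => u s ord0 k * u s ord0 k)
      (fun k => u 0 ord0 k * u 0 ord0 k) (fun k => cvgM (ck k) (ck k)).
    have E1 : g = \sum_(k < N) (fun s => u s ord0 k * u s ord0 k).
      by rewrite fct_sumE; apply/funext => s; rewrite /g; apply: eq_bigr => k _; rewrite expr2.
    have E0 : g 0 = \sum_(k < N) (u 0 ord0 k * u 0 ord0 k).
      by apply: eq_bigr => k _; rewrite expr2.
    rewrite -E1 -E0 in H. exact: H.
  have ec : e t @[t --> 0^'+] --> e 0.
    apply: cvg_at_right_filter; apply: differentiable_continuous.
    by apply/derivable1_diffP; case: (eder 0).
  exact: cvgM ec gc.
have h0 : h 0 = 0.
  rewrite /h /g /u e0 big1 ?mulr0 // => k _; rewrite subrr mxE expr0n //.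
have : h t0 <= h 0.
  apply: (@ler0_derive1_le_cc _ h 0 t0) => //.
  - by move=> s; rewrite in_itv => /andP[s0 _]; case: (hder s s0).
  - move=> s; rewrite in_itv => /andP[s0 st]; rewrite derive1E.
    by rewrite (@derive_val _ _ _ _ _ _ _ (hder s s0)); apply: hle; apply/andP; split.
  - by rewrite in_itv /= lexx ltW.
  - by rewrite in_itv /= lexx ltW.
  - exact: ltW.
rewrite h0 /h pmulr_rle0 ?expR_gt0 // => gle.
apply/rowP => k.
have H := le_trans (term_le_sum (u t0) k) gle.
have : (u t0 ord0 k) ^+ 2 == 0 by rewrite eq_le H sqr_ge0.
by rewrite sqrf_eq0 /u !mxE subr_eq0 => /eqP.
Qed.

Lemma cvg_scale_right (V : normedModType R) (y : R -> V) (c : R) : 0 < c ->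
  y t @[t --> 0^'+] --> y 0 -> y (c * t) @[t --> 0^'+] --> y 0.
Proof.
move=> c0 /cvgrPdist_lt H; apply/cvgrPdist_lt => e e0.
have [d /= d0 Hd] := H e e0.
exists (d / c); first by rewrite /= divr_gt0.
move=> t /= td t0; apply: Hd => /=; last by rewrite mulr_gt0.
move: td; rewrite !sub0r !normrN normrM (gtr0_norm c0) ltr_pdivlMr // mulrC.
by [].
Qed.

Lemma is_derive_scale_arg (V : normedModType R) (y : R -> V) (c t : R) dy :
  is_derive (c * t) (1:R) y dy -> is_derive t (1:R) (fun s => y (c * s)) (c *: dy).
Proof.
case=> dy1 <-.
have dif : differentiable y (c * t) by apply/derivable1_diffP.
have E : (fun h : R => h^-1 *: (((fun s => y (c * s)) \o shift t) (h *: 1) - y (c * t)))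
  = (fun h : R => h^-1 *: ((y \o shift (c * t)) (h *: c) - y (c * t))).
  apply/funext => h /=; congr (_ *: (y _ - _)).
  by rewrite /GRing.scale /= mulr1 mulrDr mulrC.
have dc : derivable y (c * t) c := diff_derivable (v := c) dif.
apply: DeriveDef; first by rewrite /derivable E.
rewrite /derive E.
change ('D_c y (c * t) = c *: 'D_1 y (c * t)).
rewrite !deriveE //.
have -> : c = c *: (1 : R) by rewrite /GRing.scale /= mulr1.
by rewrite linearZ /= -[c *: 1]/(c * 1) mulr1.
Qed.

Lemma inf_scale (S : set R) (k : R) : 0 < k -> (forall s, S s -> 0 < s) ->
  S !=set0 -> inf [set t | S (k * t)] = k^-1 * inf S.
Proof.
move=> k0 Spos [s0 Ss0].
have T0 : [set t | S (k * t)] !=set0.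
  by exists (k^-1 * s0) => /=; rewrite mulrA mulfV ?gt_eqF // mul1r.
have lS : has_lbound S by exists 0 => y /Spos /ltW.
have lT : has_lbound [set t | S (k * t)].
  exists 0 => y /= /Spos; rewrite pmulr_rgt0 //; exact: ltW.
apply/eqP; rewrite eq_le; apply/andP; split.
  rewrite -(ler_pM2l k0) mulrA mulfV ?gt_eqF // mul1r.
  apply: lb_le_inf; first by exists s0.
  move=> s Ss.
  rewrite -ler_pdivlMl //; apply: ge_inf => //=.
  by rewrite mulrA mulfV ?gt_eqF // mul1r.
apply: lb_le_inf => // t /= Skt.
rewrite ler_pdivrMl //; exact: ge_inf.
Qed.
End H.
Theorem proposition2 (R : realType) (n m : nat)
    (f : 'rV[R]_n -> 'rV[R]_m -> 'rV[R]_n) (ups : 'rV[R]_n -> 'rV[R]_m)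
    (phi : 'rV[R]_(n + n) -> R) (xi : 'rV[R]_n -> R -> 'rV[R]_(n + n))
    (alpha theta : R) (Z : set 'rV[R]_n) (Xi : set 'rV[R]_(n + n)) :
  (* xi(t; x) is the solution of d/dt xi = F(xi), xi(0;x) = (x,0) *)
  is_solution_map (Fext f ups) xi ->
  (* (i) F smooth, homogeneous of degree alpha >= 1 *)
  smooth (Fext f ups) -> 1 <= alpha ->
  (forall (lam : R) (y : 'rV[R]_(n + n)), 0 < lam ->
     Fext f ups (lam *: y) = (lam `^ (alpha + 1)) *: Fext f ups y) ->
  (* (ii) phi smooth, homogeneous of degree theta >= 1 *)
  smooth phi -> 1 <= theta ->
  (forall (lam : R) (y : 'rV[R]_(n + n)), 0 < lam ->
     phi (lam *: y) = (lam `^ (theta + 1)) * phi y) ->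
  (* (iii) *)
  (forall x : 'rV[R]_n, x != 0 ->
     phi (row_mx x 0) < 0 /\ exists tx : R, 0 < tx /\ phi (xi x tx) = 0) ->
  (* (iv) *)
  compact Z -> nbhs (0 : 'rV[R]_n) Z ->
  compact Xi -> nbhs (0 : 'rV[R]_(n + n)) Xi ->
  (forall (x : 'rV[R]_n) (t : R), Z x -> 0 <= t ->
     phi (xi x t) <= 0 -> Xi (xi x t)) ->
  (* (v) the origin is the only equilibrium of d/dt z = f(z, ups z) *)
  (forall z : 'rV[R]_n, f z (ups z) = 0 <-> z = 0) ->
  forall tau_i tau_i1 : R, 0 < tau_i -> tau_i < tau_i1 ->
  forall x : 'rV[R]_n, isochronous phi xi tau_i x ->
    (exists! lam : R, (0 < lam < 1) /\ isochronous phi xi tau_i1 (lam *: x)) /\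
    ~ (exists kappa : R, 1 <= kappa /\ isochronous phi xi tau_i1 (kappa *: x)).
Proof.
move=> Hsol smF alpha1 Fhom smphi theta1 phihom Hiii cZ nZ cXi nXi HXi Hv
  tau_i tau_i1 ti0 titi1 x Hx.
set F := Fext f ups in Hsol smF Fhom *.
have dF : forall y v, derivable F y v by move=> y v; exact: (smF [::]).2.
have cF : forall v, continuous (fun y => 'D_v F y) by move=> v; exact: (smF [:: v]).1.
have Flip := @lip _ _ F dF cF.
have alpha0 : 0 < alpha by apply: lt_le_trans alpha1.
have scal : forall lam, 0 < lam -> forall t, 0 <= t ->
    xi (lam *: x) t = lam *: xi x (lam `^ alpha * t).
  move=> lam l0.
  have c0 : 0 < lam `^ alpha := powR_gt0 _ l0.
  have [s1 [c1 d1]] := Hsol (lam *: x).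
  have [s2 [c2 d2]] := Hsol x.
  apply: (@ode_uniq _ _ F Flip (xi (lam *: x)) (fun t => lam *: xi x (lam `^ alpha * t))).
  - by rewrite s1 mulr0 s2 scale_row_mx scaler0.
  - exact: c1.
  - rewrite mulr0; apply: cvgZl_tmp; exact: (cvg_scale_right _ _ _ c0 c2).
  - move=> t t0.
    have ct0 : 0 < lam `^ alpha * t by rewrite mulr_gt0.
    have H1 := is_derive_scale_arg _ _ _ _ _ (d2 _ ct0).
    have H2 := is_deriveZ lam H1.
    have E : lam *: (lam `^ alpha *: F (xi x (lam `^ alpha * t))) =
        F (lam *: xi x (lam `^ alpha * t)).
      rewrite Fhom // scalerA; congr (_ *: _).
      rewrite powRD; last by apply/implyP => _; rewrite gt_eqF.
      by rewrite powRr1 ?(ltW l0) // mulrC.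
    rewrite E in H2; exact: H2.
pose S (y : 'rV[R]_n) := [set t : R | 0 < t /\ phi (xi y t) = 0].
have Hx' : inf (S x) = tau_i := Hx.
have Sne : S x !=set0.
  apply/set0P; apply/negP => /eqP E.
  by move: Hx'; rewrite E inf0 => E0; move: ti0; rewrite -E0 ltxx.
have tauS : forall lam, 0 < lam ->
    inter_event_time phi xi (lam *: x) = (lam `^ alpha)^-1 * tau_i.
  move=> lam l0.
  have c0 : 0 < lam `^ alpha := powR_gt0 _ l0.
  rewrite /inter_event_time.
  have -> : [set t | 0 < t /\ phi (xi (lam *: x) t) = 0] = [set t | S x (lam `^ alpha * t)].
    apply/seteqP; split => t /= [t0 H].
    - split; first by rewrite mulr_gt0.
      move: H; rewrite scal ?(ltW t0) // phihom // => /eqP.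
      by rewrite mulf_eq0 (gt_eqF (powR_gt0 _ l0)) /= => /eqP.
    - have t0' : 0 < t by move: t0; rewrite pmulr_rgt0.
      by split => //; rewrite scal ?(ltW t0') // phihom // H mulr0.
  by rewrite (inf_scale (S x) (lam `^ alpha) c0 _ Sne) ?Hx' // => s [].
pose rho := tau_i / tau_i1.
have ti10 : 0 < tau_i1 by apply: lt_trans titi1.
have rho0 : 0 < rho by rewrite divr_gt0.
have rho1 : rho < 1 by rewrite /rho ltr_pdivrMr // mul1r.
pose l0 := rho `^ alpha^-1.
have l0a : l0 `^ alpha = rho.
  by rewrite /l0 -powRrM mulVf ?gt_eqF // powRr1 // ltW.
have l0pos : 0 < l0 := powR_gt0 _ rho0.
have mono : forall a b, 0 <= a -> a <= b -> a `^ alpha <= b `^ alpha.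
  move=> a b a0 ab; apply: (ge0_ler_powR (ltW alpha0)) => //; rewrite nnegrE //.
  exact: le_trans ab.
have l0lt1 : l0 < 1.
  rewrite ltNge; apply/negP => H.
  have := mono _ _ ler01 H; rewrite l0a powR1 /= => H'.
  by move: rho1; rewrite ltNge H'.
split.
  exists l0; split.
    split; first by rewrite l0pos l0lt1.
    rewrite /isochronous /= tauS // l0a /rho invf_div divfK //.
    by rewrite gt_eqF.
  move=> y [/andP[y0 y1] Hy].
  move: Hy; rewrite /isochronous /= tauS // => Hy.
  have yc0 : 0 < y `^ alpha := powR_gt0 _ y0.
  have ya : y `^ alpha = rho.
    rewrite /rho -Hy invfM invrK mulrCA divff ?mulr1 //.
    by rewrite gt_eqF.
  apply: (powR_injective alpha0); rewrite ?nnegrE ?(ltW l0pos) ?(ltW y0) //.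
  by rewrite l0a ya.
move=> [k [k1 Hk]].
have k0 : 0 < k by apply: lt_le_trans k1.
move: Hk; rewrite /isochronous /= tauS // => Hk.
have ka : 1 <= k `^ alpha by have := mono _ _ ler01 k1; rewrite powR1.
have : (k `^ alpha)^-1 * tau_i <= tau_i.
  rewrite -[leRHS]mul1r ler_wpM2r ?(ltW ti0) //.
  by rewrite invf_le1 // (lt_le_trans ltr01 ka).
by rewrite Hk leNgt titi1.
Qed.
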